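(* Let $n\ge2$, $\mathbb{K}$ any field, $A_n=\mathbb{K}[x,y]/(y^{2n+3},\, x^ny^2-y^{n+2},\, x^{2n+1}-xy^{n+1})$, and let $B_n$ be the set of monomials $x^iy^j$ not divisible by any of $y^{2n+3}, xy^{n+3}, x^ny^2, x^{2n+1}$. For every monomial $x^iy^j\in\mathbb{K}[x,y]$ exactly one of the following holds: (1) $x^iy^j=0$ in $A_n$; this happens if and only if $x^iy^j$ is divisible by one of $y^{2n+3}, xy^{n+3}, x^{n+1}y^3, x^{2n+1}y^2, x^{3n+1}$; (2) $x^iy^j\in B_n$; (3) $x^iy^j\notin B_n$ and there is a unique monomial $x^{i'}y^{j'}\in B_n$ with $x^iy^j=x^{i'}y^{j'}$ in $A_n$; moreover, $x^iy^j$ and $x^{i'}y^{j'}$ occur in the same one of the relations (1)–(7) listed below. The relations are: (1) $y^{n+2}=x^ny^2$; (2) $y^{n+k+2}=x^ny^{k+2}$ for $1\le k\le n-2$; (3) $y^{2n+1}=x^ny^{n+1}=x^{3n}$; (4) $y^{2n+2}=x^ny^{n+2}=x^{2n}y^2=x^{3n}y$; (5) $x^ky^{n+2}=x^{n+k}y^2=x^{2n+k}y$ for $1\le k\le n-1$; (6) $xy^{n+1}=x^{2n+1}$; (7) $x^ky^{n+1}=x^{2n+k}$ for $2\le k\le n-1$ (each displayed chain with a fixed $k$ counts as one relation).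
   Context: It is a fact (shown in the paper) that the images of the monomials in $B_n$ form a basis of $A_n$ and that relations (1)–(7) hold in $A_n$; each monomial appearing in (1)–(7) occurs in exactly one of these relations. *)

(* Defs.v *)
From HB Require Import structures.
From mathcomp Require Import all_boot all_order all_algebra.
From mathcomp Require Import mpoly.
Set Implicit Arguments. Unset Strict Implicit. Unset Printing Implicit Defensive.
Import GRing.Theory.
Local Open Scope ring_scope.

Section Defs.
Variable K : fieldType.

Definition idx0 : 'I_2 := Ordinal (isT : (0 < 2)%N).
Definition idx1 : 'I_2 := Ordinal (isT : (1 < 2)%N).

Definition xv : {mpoly K[2]} := 'X_idx0.
Definition yv : {mpoly K[2]} := 'X_idx1.

Definition mon (i j : nat) : {mpoly K[2]} := xv ^+ i * yv ^+ j.

Definition gen1 (n : nat) : {mpoly K[2]} := yv ^+ (2 * n + 3).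
Definition gen2 (n : nat) : {mpoly K[2]} := mon n 2 - yv ^+ (n + 2).
Definition gen3 (n : nat) : {mpoly K[2]} := xv ^+ (2 * n + 1) - mon 1 (n + 1).

Definition eqA (n : nat) (p q : {mpoly K[2]}) : Prop :=
  exists a b c : {mpoly K[2]}, p - q = a * gen1 n + b * gen2 n + c * gen3 n.
End Defs.

Definition mdiv (a b i j : nat) : bool := (a <= i)%N && (b <= j)%N.

Definition inB (n i j : nat) : bool :=
  ~~ [|| mdiv 0 (2 * n + 3) i j, mdiv 1 (n + 3) i j, mdiv n 2 i j
       | mdiv (2 * n + 1) 0 i j].

(* the list of relations (1)-(7), each given as the list of exponent pairs
   (i,j) of the monomials x^i y^j occurring in it *)
Definition relations (n : nat) : seq (seq (nat * nat)) :=
  [:: [:: (0, n + 2); (n, 2)]] ++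
  [seq [:: (0, n + k + 2); (n, k + 2)] | k <- iota 1 (n - 2)] ++
  [:: [:: (0, 2 * n + 1); (n, n + 1); (3 * n, 0)]] ++
  [:: [:: (0, 2 * n + 2); (n, n + 2); (2 * n, 2); (3 * n, 1)]] ++
  [seq [:: (k, n + 2); (n + k, 2); (2 * n + k, 1)] | k <- iota 1 (n - 1)] ++
  [:: [:: (1, n + 1); (2 * n + 1, 0)]] ++
  [seq [:: (k, n + 1); (2 * n + k, 0)] | k <- iota 2 (n - 2)].

Definition same_relation (n i j i' j' : nat) : Prop :=
  exists2 r, r \in relations n & ((i, j) \in r) && ((i', j') \in r).

Definition exactly_one (P Q R : Prop) : Prop :=
  [\/ P /\ ~ Q /\ ~ R, ~ P /\ Q /\ ~ R | ~ P /\ ~ Q /\ R].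

(* Main.v *)
Require Import Defs.
From HB Require Import structures.
From mathcomp Require Import all_boot all_order all_algebra.
From mathcomp Require Import mpoly.
From mathcomp Require Import zify bigenough ssrcomplements ring.

Definition zeroB (n i j : nat) : bool :=
  [|| mdiv 0 (2 * n + 3) i j, mdiv 1 (n + 3) i j, mdiv (n + 1) 3 i j,
         mdiv (2 * n + 1) 2 i j | mdiv (3 * n + 1) 0 i j].

Definition nf (n i j : nat) : option (nat * nat) :=
  if zeroB n i j then None
  else if inB n i j then Some (i, j)
  else if i == n then Some (0, n + j)
  else if j == 2 then (if i == 2 * n then Some (0, 2 * n + 2) else Some (i - n, n + 2))
  else if j == 1 then (if i == 3 * n then Some (0, 2 * n + 2) else Some (i - 2 * n, n + 2))
  else (if i == 3 * n then Some (0, 2 * n + 1) else Some (i - 2 * n, n + 1)).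

Ltac splitall := repeat (case: ifP => ?).
Ltac fin := first [ done | (exfalso; lia) | (congr (Some (_, _)); lia) ].

Lemma G1 n i j : (2 <= n)%N -> nf n i (j + (2 * n + 3)) = None.
Proof. move=> hn; rewrite /nf /zeroB /mdiv; splitall; fin. Qed.

Lemma G2 n i j : (2 <= n)%N -> nf n (i + n) (j + 2) = nf n i (j + (n + 2)).
Proof. move=> hn; rewrite /nf /zeroB /inB /mdiv; splitall; fin. Qed.

Lemma G3 n i j : (2 <= n)%N -> nf n (i + (2 * n + 1)) j = nf n (i + 1) (j + (n + 1)).
Proof. move=> hn; rewrite /nf /zeroB /inB /mdiv; splitall; fin. Qed.

Lemma F1 n i j : nf n i j = None <-> zeroB n i j.
Proof. rewrite /nf; split; [splitall => //| by move=> ->]. Qed.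

Lemma F2 n i j : inB n i j -> nf n i j = Some (i, j).
Proof.
move=> hB; rewrite /nf hB; case: ifP => // hz; move: hB hz.
by rewrite /inB /zeroB /mdiv => ? ?; exfalso; lia.
Qed.

Lemma zero_notB n i j : (2 <= n)%N -> zeroB n i j -> ~~ inB n i j.
Proof. by rewrite /inB /zeroB /mdiv => ? ?; lia. Qed.

Lemma F3 n i j a b : (2 <= n)%N -> nf n i j = Some (a, b) -> inB n a b.
Proof.
move=> hn; rewrite /nf /inB /zeroB /mdiv; splitall => //; case=> <- <-; lia.
Qed.

Lemma inrel1 n : [:: (0, n + 2); (n, 2)] \in relations n.
Proof. by rewrite /relations !mem_cat !inE eqxx. Qed.
Lemma inrel2 n k : (1 <= k <= n - 2)%N ->
  [:: (0, n + k + 2); (n, k + 2)] \in relations n.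
Proof.
move=> hk; rewrite /relations !mem_cat; apply/orP; right; apply/orP; left.
apply/mapP; exists k => //; rewrite mem_iota; lia.
Qed.
Lemma inrel3 n : [:: (0, 2 * n + 1); (n, n + 1); (3 * n, 0)] \in relations n.
Proof. by rewrite /relations !mem_cat !inE eqxx !orbT. Qed.
Lemma inrel4 n : [:: (0, 2 * n + 2); (n, n + 2); (2 * n, 2); (3 * n, 1)] \in relations n.
Proof. by rewrite /relations !mem_cat !inE eqxx !orbT. Qed.
Lemma inrel5 n k : (1 <= k <= n - 1)%N ->
  [:: (k, n + 2); (n + k, 2); (2 * n + k, 1)] \in relations n.
Proof.
move=> hk; rewrite /relations !mem_cat; do 4 (apply/orP; right); apply/orP; left.
apply/mapP; exists k => //; rewrite mem_iota; lia.
Qed.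
Lemma inrel6 n : [:: (1, n + 1); (2 * n + 1, 0)] \in relations n.
Proof. by rewrite /relations !mem_cat !inE eqxx !orbT. Qed.
Lemma inrel7 n k : (2 <= k <= n - 1)%N ->
  [:: (k, n + 1); (2 * n + k, 0)] \in relations n.
Proof.
move=> hk; rewrite /relations !mem_cat; do 6 (apply/orP; right).
apply/mapP; exists k => //; rewrite mem_iota; lia.
Qed.

Ltac memlia := by rewrite !inE !xpair_eqE; lia.

Lemma F4 n i j : (2 <= n)%N -> ~~ zeroB n i j -> ~~ inB n i j ->
  exists a b, nf n i j = Some (a, b) /\ same_relation n i j a b.
Proof.
move=> hn hz hB; rewrite /nf (negbTE hz) (negbTE hB).
move: hz hB; rewrite /zeroB /inB /mdiv => hz hB.
case: ifP => [/eqP ein|nin].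
  subst i; exists 0%N, (n + j); split => //.
  have [j2|j2] := eqVneq j 2.
    subst j; exists [:: (0, n + 2); (n, 2)]; [exact: inrel1| memlia].
  have [jn1|jn1] := eqVneq j (n + 1).
    subst j; exists [:: (0, 2 * n + 1); (n, n + 1); (3 * n, 0)]; first exact: inrel3.
    memlia.
  have [jn2|jn2] := eqVneq j (n + 2).
    subst j; exists [:: (0, 2 * n + 2); (n, n + 2); (2 * n, 2); (3 * n, 1)]; first exact: inrel4.
    memlia.
  exists [:: (0, n + (j - 2) + 2); (n, (j - 2) + 2)]; first by apply: inrel2; lia.
  memlia.
case: ifP => [/eqP ej|nj].
  subst j; case: ifP => [/eqP ei|ni].
    subst i; exists 0%N, (2 * n + 2); split => //.
    exists [:: (0, 2 * n + 2); (n, n + 2); (2 * n, 2); (3 * n, 1)]; first exact: inrel4.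
    memlia.
  exists (i - n)%N, (n + 2); split => //.
  exists [:: (i - n, n + 2); (n + (i - n), 2); (2 * n + (i - n), 1)]; first by apply: inrel5; lia.
  memlia.
case: ifP => [/eqP ej|nj1].
  subst j; case: ifP => [/eqP ei|ni].
    subst i; exists 0%N, (2 * n + 2); split => //.
    exists [:: (0, 2 * n + 2); (n, n + 2); (2 * n, 2); (3 * n, 1)]; first exact: inrel4.
    memlia.
  exists (i - 2 * n)%N, (n + 2); split => //.
  exists [:: (i - 2 * n, n + 2); (n + (i - 2 * n), 2); (2 * n + (i - 2 * n), 1)]; first by apply: inrel5; lia.
  memlia.
have ej : j = 0%N by lia.
subst j; case: ifP => [/eqP ei|ni].
  subst i; exists 0%N, (2 * n + 1); split => //.
  exists [:: (0, 2 * n + 1); (n, n + 1); (3 * n, 0)]; first exact: inrel3.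
  memlia.
exists (i - 2 * n)%N, (n + 1); split => //.
have [i1|i1] := eqVneq i (2 * n + 1).
  subst i; exists [:: (1, n + 1); (2 * n + 1, 0)]; first exact: inrel6.
  memlia.
exists [:: (i - 2 * n, n + 1); (2 * n + (i - 2 * n), 0)]; first by apply: inrel7; lia.
memlia.
Qed.

Import GRing.Theory BigEnough.
Local Open Scope ring_scope.

Section Alg.
Variable K : fieldType.
Implicit Types p q : {mpoly K[2]}.

Definition Lw (w : 'X_{1..2} -> K) p : K := \sum_(m <- msupp p) p@_m * w m.

Lemma LwE w p k : (msize p <= k)%N ->
  Lw w p = \sum_(m : 'X_{1..2 < k}) p@_m * w m.
Proof.
move=> le_pi; set I : subFinType _ := 'X_{1..2 < k}.
rewrite /Lw (big_mksub I) ?msupp_uniq //=; first last.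
  by move=> x /msize_mdeg_lt /leq_trans; apply.
rewrite big_rmcond //= => j /memN_msupp_eq0 ->.
by rewrite mul0r.
Qed.

Lemma LwB w p q : Lw w (p - q) = Lw w p - Lw w q.
Proof.
pose_big_enough k.
  rewrite !(LwE w _ k) // -sumrB; apply/eq_bigr.
  by case=> /= [m _] _; rewrite mcoeffB mulrBl.
by close.
Qed.

Lemma LwD w p q : Lw w (p + q) = Lw w p + Lw w q.
Proof.
pose_big_enough k.
  rewrite !(LwE w _ k) // -big_split; apply/eq_bigr.
  by case=> /= [m _] _; rewrite mcoeffD mulrDl.
by close.
Qed.

Lemma LwZ w c p : Lw w (c *: p) = c * Lw w p.
Proof.
pose_big_enough k.
  rewrite !(LwE w _ k) // mulr_sumr; apply/eq_bigr.
  by case=> /= [m _] _; rewrite mcoeffZ mulrA.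
by close.
Qed.

Lemma Lw0 w : Lw w 0 = 0.
Proof. by rewrite /Lw msupp0 big_nil. Qed.

Lemma LwX w m : Lw w 'X_[m] = w m.
Proof. by rewrite /Lw msuppX big_seq1 mcoeffX eqxx mul1r. Qed.

Lemma LwM w g : (forall m, Lw w ('X_[m] * g) = 0) -> forall a, Lw w (a * g) = 0.
Proof.
move=> h a; rewrite {1}(mpolyE a) mulr_suml.
elim: (msupp a) => [|m s IH]; first by rewrite big_nil Lw0.
by rewrite big_cons LwD IH -scalerAl LwZ h mulr0 addr0.
Qed.


Definition mk (i j : nat) : 'X_{1..2} := (U_(idx0) *+ i + U_(idx1) *+ j)%MM.

Lemma mk0 i j : mk i j idx0 = i.
Proof. by rewrite /mk mnmDE !mulmnE !mnm1E /=; lia. Qed.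
Lemma mk1 i j : mk i j idx1 = j.
Proof. by rewrite /mk mnmDE !mulmnE !mnm1E /=; lia. Qed.

Lemma monE i j : mon K i j = 'X_[mk i j].
Proof. by rewrite /mon /xv /yv /mk mpolyXD !mpolyXn. Qed.

Lemma mkD i j a b : (mk i j + mk a b)%MM = mk (i + a) (j + b).
Proof. by apply/mnmP => k; rewrite mnmDE /mk !mnmDE !mulmnE; lia. Qed.

Lemma monM i j a b : mon K i j * mon K a b = mon K (i + a) (j + b).
Proof. by rewrite !monE -mpolyXD mkD. Qed.


Lemma mkE (m : 'X_{1..2}) : m = mk (m idx0) (m idx1).
Proof.
apply/mnmP => k; rewrite /mk mnmDE !mulmnE !mnm1E.
case: k => [[|[|k]] hk] //=; rewrite !mul1n !mul0n ?addn0 ?add0n;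
  by congr (m _); apply: val_inj.
Qed.

Lemma gen1E n : gen1 K n = mon K 0 (2 * n + 3).
Proof. by rewrite /gen1 /mon expr0 mul1r. Qed.
Lemma gen2E n : gen2 K n = mon K n 2 - mon K 0 (n + 2).
Proof. by rewrite /gen2 /mon expr0 mul1r. Qed.
Lemma gen3E n : gen3 K n = mon K (2 * n + 1) 0 - mon K 1 (n + 1).
Proof. by rewrite /gen3 /mon expr0 mulr1. Qed.

Definition wv n b (m : 'X_{1..2}) : K :=
  if nf n (m idx0) (m idx1) == Some b then 1 else 0.

Lemma Lwmon n b i j : Lw (wv n b) (mon K i j) = if nf n i j == Some b then 1 else 0.
Proof. by rewrite monE LwX /wv mk0 mk1. Qed.

Lemma LweqA n b p q : (2 <= n)%N -> eqA n p q -> Lw (wv n b) p = Lw (wv n b) q.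
Proof.
move=> hn [a [b' [c E]]]; apply/eqP; rewrite -subr_eq0 -LwB E !LwD.
rewrite !LwM ?addr0 // => m; rewrite (mkE m) -monE.
- rewrite gen3E mulrBr !monM LwB !Lwmon.
  by rewrite addn0 G3 // subrr.
- rewrite gen2E mulrBr !monM LwB !Lwmon.
  by rewrite addn0 G2 // subrr.
- by rewrite gen1E monM Lwmon addn0 G1.
Qed.

Lemma A1 n i j : (2 <= n)%N -> eqA n (mon K i j) 0 -> nf n i j = None.
Proof.
move=> hn h; case E: (nf n i j) => [b|] //.
have := LweqA n b _ _ hn h; rewrite Lwmon Lw0 E eqxx => /eqP; by rewrite oner_eq0.
Qed.

Lemma A2 n i j a c : (2 <= n)%N -> eqA n (mon K i j) (mon K a c) -> nf n i j = nf n a c.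
Proof.
move=> hn h; case E: (nf n i j) => [b|].
  have := LweqA n b _ _ hn h; rewrite !Lwmon E eqxx.
  by case: eqP => // _ /eqP; rewrite oner_eq0.
case E': (nf n a c) => [b|] //.
have := LweqA n b _ _ hn h; rewrite !Lwmon E E' eqxx => /eqP.
by rewrite eq_sym oner_eq0.
Qed.


Section Pos.
Variable n : nat.
Hypothesis hn : (2 <= n)%N.

Local Notation E i j a c := (eqA n (mon K i j) (mon K a c)).
Local Notation Z i j := (eqA n (mon K i j) 0).

Lemma eqA_refl p : eqA n p p.
Proof. by exists 0, 0, 0; rewrite subrr !mul0r !addr0. Qed.

Lemma eqA_sym {p q} : eqA n p q -> eqA n q p.
Proof.
case=> a [b [c h]]; exists (- a), (- b), (- c).
by rewrite -opprB h !mulNr !opprD.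
Qed.

Lemma eqA_trans {p q r} : eqA n p q -> eqA n q r -> eqA n p r.
Proof.
case=> a [b [c h]] [a' [b' [c' h']]]; exists (a + a'), (b + b'), (c + c').
have -> : p - r = (p - q) + (q - r) by rewrite addrA subrK.
by rewrite h h' !mulrDl; ring.
Qed.

Lemma eqA_mul r {p q} : eqA n p q -> eqA n (r * p) (r * q).
Proof.
case=> a [b [c h]]; exists (r * a), (r * b), (r * c).
by rewrite -mulrBr h !mulrDr !mulrA.
Qed.

Lemma Eg {i j a c I J A C} : E i j a c -> (i <= I)%N -> (j <= J)%N ->
  A = (I - i + a)%N -> C = (J - j + c)%N -> E I J A C.
Proof.
move=> h hi hj -> ->; have := eqA_mul (mon K (I - i) (J - j)) h.
rewrite !monM; have -> : (I - i + i = I)%N by lia.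
by have -> : (J - j + j = J)%N by lia.
Qed.

Lemma Zg {i j I J} : Z i j -> (i <= I)%N -> (j <= J)%N -> Z I J.
Proof.
move=> h hi hj; have := eqA_mul (mon K (I - i) (J - j)) h.
rewrite mulr0 !monM; have -> : (I - i + i = I)%N by lia.
by have -> : (J - j + j = J)%N by lia.
Qed.

Lemma EZ {i j a c} : E i j a c -> Z a c -> Z i j.
Proof. exact: eqA_trans. Qed.

Lemma R1 : E n 2 0 (n + 2).
Proof. by exists 0, 1, 0; rewrite -gen2E !mul0r mul1r addr0 add0r. Qed.
Lemma R2 : E (2 * n + 1) 0 1 (n + 1).
Proof. by exists 0, 0, 1; rewrite -gen3E !mul0r mul1r !add0r. Qed.
Lemma R3 : Z 0 (2 * n + 3).
Proof. by exists 1, 0, 0; rewrite subr0 -gen1E !mul0r mul1r !addr0. Qed.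

Lemma Zxy : Z 1 (n + 3).
Proof.
have e1 : E 1 (n + 3) (2 * n + 1) 2.
  by apply: eqA_sym; apply: (Eg R2); lia.
have e2 : E (2 * n + 1) 2 (n + 1) (n + 2) by apply: (Eg R1); lia.
have e3 : E (n + 1) (n + 2) 1 (2 * n + 2) by apply: (Eg R1); lia.
have e4 : E 1 (n + 3) 1 (2 * n + 2) := eqA_trans e1 (eqA_trans e2 e3).
have e5 : E 1 (2 * n + 2) 1 (3 * n + 1) by apply: (Eg e4); lia.
have z : Z 1 (3 * n + 1) by apply: (Zg R3); lia.
exact: EZ e4 (EZ e5 z).
Qed.

Lemma Zx3 : Z (n + 1) 3.
Proof. by apply: (EZ _ Zxy); apply: (Eg R1); lia. Qed.
Lemma Zx2 : Z (2 * n + 1) 2.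
Proof. by apply: (EZ _ Zxy); apply: (Eg R2); lia. Qed.
Lemma Zx0 : Z (3 * n + 1) 0.
Proof.
apply: (EZ (a := n + 1) (c := n + 1)); first by apply: (Eg R2); lia.
by apply: (Zg Zx3); lia.
Qed.

Lemma A3 i j : match nf n i j with None => Z i j | Some (a, c) => E i j a c end.
Proof.
rewrite /nf; case: ifP => hz.
  move: hz; rewrite /zeroB /mdiv.
  case/orP => [|/orP[|/orP[|/orP[]]]] /andP [h1 h2].
  - by apply: (Zg R3).
  - by apply: (Zg Zxy).
  - by apply: (Zg Zx3).
  - by apply: (Zg Zx2).
  - by apply: (Zg Zx0).
case: ifP => hB; first exact: eqA_refl.
move: hz hB; rewrite /zeroB /inB /mdiv => hz hB.
case: ifP => [/eqP ei|ni].
  by subst i; apply: (Eg R1); lia.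
case: ifP => [/eqP ej|nj].
  subst j; case: ifP => [/eqP ei|ni2].
    apply: (eqA_trans (q := mon K n (n + 2))); apply: (Eg R1); lia.
  by apply: (Eg R1); lia.
case: ifP => [/eqP ej|nj1].
  subst j; case: ifP => [/eqP ei|ni2].
    apply: (eqA_trans (q := mon K n (n + 2))); [apply: (Eg R2) | apply: (Eg R1)]; lia.
  by apply: (Eg R2); lia.
case: ifP => [/eqP ei|ni2].
  apply: (eqA_trans (q := mon K n (n + 1))); [apply: (Eg R2) | apply: (Eg R1)]; lia.
by apply: (Eg R2); lia.
Qed.

End Pos.
End Alg.


Theorem corollary2p5 (K : fieldType) (n : nat) (hn : (2 <= n)%N) (i j : nat) :
  exactly_one
    (eqA n (mon K i j) 0)
    (inB n i j)
    (~~ inB n i j /\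
     exists i' j' : nat,
       [/\ inB n i' j', eqA n (mon K i j) (mon K i' j'),
           (forall i'' j'' : nat, inB n i'' j'' ->
              eqA n (mon K i j) (mon K i'' j'') -> i'' = i' /\ j'' = j')
         & same_relation n i j i' j'])
  /\
  (eqA n (mon K i j) 0 <->
     [|| mdiv 0 (2 * n + 3) i j, mdiv 1 (n + 3) i j, mdiv (n + 1) 3 i j,
         mdiv (2 * n + 1) 2 i j | mdiv (3 * n + 1) 0 i j]).
Proof.
have hiff : eqA n (mon K i j) 0 <-> zeroB n i j.
  split => [h | hz]; first by apply/F1; exact: (A1 K n i j hn h).
  by have := A3 K n hn i j; rewrite (proj2 (F1 n i j) hz).
split; last exact: hiff.
case hz: (zeroB n i j).
  apply: Or31; split; first exact/hiff.
  split; first by apply/negP; rewrite (negbTE (zero_notB n i j hn hz)).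
  case=> _ [i' [j' [hB' he _ _]]].
  by have := A2 K n i j i' j' hn he; rewrite (F2 n i' j' hB') (proj2 (F1 n i j) hz).
case hB: (inB n i j).
  apply: Or32; split; first by move/hiff; rewrite hz.
  by split => // [[]].
apply: Or33; split; first by move/hiff; rewrite hz.
split => //; split => //.
have [a [b [hnf hrel]]] := F4 n i j hn (negbT hz) (negbT hB).
exists a, b; split => //.
- exact: F3 n i j a b hn hnf.
- by have := A3 K n hn i j; rewrite hnf.
- move=> i'' j'' hB'' he; have := A2 K n i j i'' j'' hn he; rewrite hnf (F2 n i'' j'' hB'').
  by case=> -> ->.
Qed.
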